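(* Let $n,t$ be positive integers and let $\mathcal{B}$ be a partition of $[n]$ into $t$ nonempty blocks. Let $\mathcal{B}'\subseteq\mathcal{B}$ be nonempty, let $\ell=\sum_{B\in\mathcal{B}'}|B|$, and let $\langle i_1<i_2<\cdots<i_\ell\rangle$ be the increasing enumeration of $\bigcup_{B\in\mathcal{B}'}B$. Then $K[\underline{i},\mathcal{B}']=K[\underline{i}',\mathcal{B}']$ in each of the following cases: - for every $l\in[\ell-1]$ and all $\underline{i},\underline{i}'$ with $i_l<\underline{i},\underline{i}'\le i_{l+1}$; - for all $\underline{i},\underline{i}'$ with $1\le\underline{i},\underline{i}'\le i_1$; - for all $\underline{i},\underline{i}'$ with $i_\ell<\underline{i},\underline{i}'\le n$.
   Context: Let $A(n)$ be the infinite sequence obtained by concatenating infinitely many copies (segments, numbered $1,2,\ldots$) of $\langle1,2,\ldots,n\rangle$. A position is a pair $(\kappa,v)$ consisting of a segment index $\kappa\ge1$ and a value $v\in[n]$. Positions are ordered lexicographically. A placement of a nonempty $\mathcal{B}'\subseteq\mathcal{B}$ assigns to each $x\in\bigcup_{B\in\mathcal{B}'}B$ a position $(\kappa_x,x)$, with distinct elements at distinct positions. It is valid if, for any two distinct blocks $B,C\in\mathcal{B}'$, no element of $B$ lies strictly between the smallest and the largest positions occupied by elements of $C$. The number of segments used is $\max_x\kappa_x$. $K[\underline{i},\mathcal{B}']$ is the minimum number of segments used by a valid placement of $\mathcal{B}'$ all of whose positions are $\ge(1,\underline{i})$. *)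

(* Defs.v *)
From mathcomp Require Import all_boot.
From Stdlib Require Import ClassicalEpsilon.
Set Implicit Arguments. Unset Strict Implicit. Unset Printing Implicit Defensive.

(* Elements of [n] are represented by x : 'I_n, with value x.+1 in {1..n}.
   A position is a pair (kappa, v) of a segment index and a value (nats). *)

Definition pos_lt (p q : nat * nat) : bool :=
  (p.1 < q.1) || ((p.1 == q.1) && (p.2 < q.2)).
Definition pos_le (p q : nat * nat) : bool := (p == q) || pos_lt p q.

Definition posof n (kappa : 'I_n -> nat) (x : 'I_n) : nat * nat :=
  (kappa x, x.+1).

Definition valid_placement n (Bp : {set {set 'I_n}}) (kappa : 'I_n -> nat) : Prop :=
  (forall x, x \in cover Bp -> 1 <= kappa x) /\
  (forall C D, C \in Bp -> D \in Bp -> C != D ->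
     forall x, x \in D ->
       ~ (exists a b, [/\ a \in C, b \in C,
            pos_lt (posof kappa a) (posof kappa x) &
            pos_lt (posof kappa x) (posof kappa b)])).

Definition segs_used n (Bp : {set {set 'I_n}}) (kappa : 'I_n -> nat) : nat :=
  \max_(x in cover Bp) kappa x.

Definition Kset n (Bp : {set {set 'I_n}}) (i : nat) (k : nat) : Prop :=
  exists kappa : 'I_n -> nat,
    [/\ valid_placement Bp kappa,
        (forall x, x \in cover Bp -> pos_le (1, i) (posof kappa x)) &
        segs_used Bp kappa = k].

Definition Kb n (Bp : {set {set 'I_n}}) (i : nat) (k : nat) : bool :=
  if excluded_middle_informative (Kset Bp i k) then true else false.

(* K[i, Bp] : the minimum of Kset (0 if no valid placement exists, which
   never happens for nonempty Bp) *)
Definition K n (Bp : {set {set 'I_n}}) (i : nat) : nat :=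
  match excluded_middle_informative (exists k, Kb Bp i k) with
  | left h => ex_minn h
  | right _ => 0
  end.

Definition union_enum n (Bp : {set {set 'I_n}}) : seq nat :=
  sort leq [seq (nat_of_ord x).+1 | x <- enum (cover Bp)].

(* Main.v *)
Require Import Defs.
From mathcomp Require Import all_boot.
From Stdlib Require Import FunctionalExtensionality PropExtensionality ClassicalEpsilon.

Definition Kf (P : nat -> Prop) : nat :=
  match excluded_middle_informative
          (exists k, (if excluded_middle_informative (P k) then true else false)) with
  | left h => ex_minn h
  | right _ => 0
  end.

Lemma pos_leE i k v : pos_le (1,i) (k,v) = (1 < k) || ((k == 1) && (i <= v)).
Proof.
rewrite /pos_le /pos_lt /= xpair_eqE.
case: k => [|[|k]] //=; rewrite ?orbF ?orbT //.
by rewrite [i <= v]leq_eqVlt.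
Qed.

Lemma K_ext n (Bp : {set {set 'I_n}}) i i' :
  (forall v, v \in union_enum Bp -> (i <= v) = (i' <= v)) -> K Bp i = K Bp i'.
Proof.
move=> hv.
have H: forall kappa : 'I_n -> nat,
  (forall x, x \in cover Bp -> pos_le (1,i) (posof kappa x)) <->
  (forall x, x \in cover Bp -> pos_le (1,i') (posof kappa x)).
  move=> kappa.
  have e: forall x, x \in cover Bp -> pos_le (1,i) (posof kappa x) = pos_le (1,i') (posof kappa x).
    move=> x hx; rewrite /posof !pos_leE hv //.
    by rewrite /union_enum mem_sort; apply: map_f; rewrite mem_enum.
  by split=> h x hx; [rewrite -e | rewrite e]; auto.
have E: Kset Bp i = Kset Bp i'.
  apply: functional_extensionality => k; apply: propositional_extensionality.
  by rewrite /Kset; split=> -[kappa [V P S]]; exists kappa; split=> //; apply/H.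
change (Kf (Kset Bp i) = Kf (Kset Bp i')); by rewrite E.
Qed.

Lemma snth (s : seq nat) i j : sorted leq s -> i < size s -> j < size s -> i <= j ->
  nth 0 s i <= nth 0 s j.
Proof. move=> h hi hj hij; apply: (sorted_leq_nth leq_trans leqnn 0 h) => //; by rewrite inE. Qed.

Theorem lemma2 (n t : nat) (B : {set {set 'I_n}}) (Bp : {set {set 'I_n}}) :
  0 < n -> 0 < t ->
  partition B [set: 'I_n] -> #|B| = t ->
  Bp \subset B -> Bp != set0 ->
  let ell := \sum_(C in Bp) #|C| in
  let s := union_enum Bp in
  let ii := fun l => nth 0 s l.-1 in  (* ii l = i_l, 1-indexed *)
  [/\ (forall l i i', 1 <= l <= ell.-1 ->
         ii l < i <= ii l.+1 -> ii l < i' <= ii l.+1 ->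
         K Bp i = K Bp i'),
      (forall i i', 1 <= i <= ii 1 -> 1 <= i' <= ii 1 -> K Bp i = K Bp i') &
      (forall i i', ii ell < i <= n -> ii ell < i' <= n -> K Bp i = K Bp i')].
Proof.
move=> _ _ hP _ hsub _ ell s ii.
have srt: sorted leq s by apply: sort_sorted; exact: leq_total.
have hsz: size s = ell.
  rewrite /s /union_enum size_sort size_map -cardE /ell.
  move: hP => /and3P [_ tI _].
  by move: (trivIsetS hsub tI); rewrite /trivIset => /eqP.
have nthP: forall v, v \in s -> exists2 j, j < size s & v = nth 0 s j.
  by move=> v hv; exists (index v s); [rewrite index_mem | rewrite nth_index].
split.
- move=> l i i' /andP [hl _] /andP [h1 h2] /andP [h1' h2']; apply: K_ext => v hv.
  have ls: l < size s.
    rewrite ltnNge; apply/negP => hle.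
    by move: h1 h2; rewrite /ii /= (nth_default 0 hle) => /leq_trans H /H.
  have [j hj ->] := nthP v hv.
  case: (ltnP j l) => hjl.
  + have: nth 0 s j <= ii l.
      by apply: snth => //; [exact: (leq_ltn_trans (leq_pred l) ls) | case: l hl hjl {h1 h2 h1' h2' ls}].
    move=> hle.
    have -> : (i <= nth 0 s j) = false by apply/negbTE; rewrite -ltnNge; apply: leq_ltn_trans h1.
    have -> : (i' <= nth 0 s j) = false by apply/negbTE; rewrite -ltnNge; apply: leq_ltn_trans h1'.
    done.
  + have: ii l.+1 <= nth 0 s j by apply: snth.
    move=> hge.
    by rewrite (leq_trans h2 hge) (leq_trans h2' hge).
- move=> i i' /andP [h1 h2] /andP [h1' h2']; apply: K_ext => v hv.
  have [j hj ->] := nthP v hv.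
  have hge: ii 1 <= nth 0 s j.
    by apply: snth => //; apply: leq_ltn_trans hj.
  by rewrite (leq_trans h2 hge) (leq_trans h2' hge).
- move=> i i' /andP [h1 _] /andP [h1' _]; apply: K_ext => v hv.
  have [j hj ->] := nthP v hv.
  have hle: nth 0 s j <= ii ell.
    rewrite /ii -hsz; apply: snth => //.
    + by case: (size s) hj.
    + by case: (size s) hj.
  have -> : (i <= nth 0 s j) = false by apply/negbTE; rewrite -ltnNge; apply: leq_ltn_trans h1.
  have -> : (i' <= nth 0 s j) = false by apply/negbTE; rewrite -ltnNge; apply: leq_ltn_trans h1'.
  done.
Qed.
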